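(* Let $k_1,k_2$ be integers with $0<k_1\le 10$ and $0<k_2$, and let $f=f_{k_1,k_2}$. Then $g(f)=k_1$, $r(f)=k_2+1$, and consequently $s(f)=\min\left\{\frac{k_2+1}{2},\,k_1+1\right\}$.
   Context: Throughout, $d=10$ and $\mathbb{Z}_{10}$ is the ring of integers mod $10$. For integers $k_1,k_2>0$ define $f_{k_1,k_2}:\mathbb{Z}_{10}^{10+k_1+k_2}\to\mathbb{Z}_{10}$ by $f_{k_1,k_2}(x_0,\dots,x_{9+k_1+k_2}) = x_j + \sum_{i=10+k_1}^{9+k_1+k_2} x_i \bmod 10$, where $j=\left(\sum_{i=10}^{9+k_1}x_i\right)\bmod 10\in\{0,\dots,9\}$. For a function $f:\mathbb{Z}_d^k\to\mathbb{Z}_d$: the Hamming weight $H(\alpha)$ of $\alpha\in\mathbb{Z}_d^k$ is its number of nonzero coordinates. Fourier basis: $\chi_\alpha(x)=\exp\!\left(-2\pi\sqrt{-1}\,(x\cdot\alpha)/d\right)$ for $\alpha,x\in\mathbb{Z}_d^k$; every $Q:\mathbb{Z}_d^k\to\mathbb{R}$ has a unique expansion $Q=\sum_{\alpha}\hat Q_\alpha\chi_\alpha$. For $j\in\mathbb{Z}_d$ let $Q^{f,j}:\mathbb{Z}_d^k\to\{\pm1\}$, $Q^{f,j}(x)=1$ if $f(x)=j$ and $-1$ otherwise. The distributional complexity of $Q$ is $r(Q)=\min\{H(\alpha): \alpha\neq\vec 0,\ \hat Q_\alpha\neq 0\}$, and $r(f)=\min_{j\in\mathbb{Z}_d} r(Q^{f,j})$.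 Further, $g(f)$ is the least integer $\ell\ge 0$ such that there exist a set $S\subseteq[k]$ of $|S|=\ell$ coordinates, values $\alpha\in\mathbb{Z}_d^{\ell}$ and a modulus $\hat d$ with $2\le\hat d\le d$ such that the restriction $f_{|S,\alpha}:\mathbb{Z}_d^{k-\ell}\to\mathbb{Z}_d$ (fix the coordinates in $S$ to $\alpha$) is a linear function mod $\hat d$, i.e. there are integers $a_i,b$ with $f_{|S,\alpha}(y)\equiv b+\sum_i a_iy_i \pmod{\hat d}$ for all $y$ (elements of $\mathbb{Z}_d$ identified with $\{0,\dots,d-1\}$). Finally $s(f)=\min\{r(f)/2,\,g(f)+1\}$. *)

(* Defs.v *)
From HB Require Import structures.
From mathcomp Require Import all_boot all_order all_algebra all_field.
From Stdlib Require Import ClassicalEpsilon.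
Set Implicit Arguments. Unset Strict Implicit. Unset Printing Implicit Defensive.
Import Order.TTheory GRing.Theory Num.Theory Num.Def.
Local Open Scope ring_scope.

(* d = 10; Z_10 is represented by 'I_10 (values 0..9). *)
Definition vec (k : nat) := {ffun 'I_k -> 'I_10}.

Definition asbool (P : Prop) : bool :=
  if excluded_middle_informative P then true else false.

Definition modZ10 (n : nat) : 'I_10 := Ordinal (ltn_pmod n (erefl true : (0 < 10)%N)).

(* x_i as a natural number (0 if i is out of range; never used out of range) *)
Definition xat k (x : vec k) (i : nat) : nat :=
  match @insub nat (fun m => m < k)%N _ i with Some o => val (x o) | None => 0%N end.

Definition fk (k1 k2 : nat) (x : vec (10 + k1 + k2)) : 'I_10 :=
  let j := ((\sum_(10 <= i < 10 + k1) xat x i) %% 10)%N in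
  modZ10 (xat x j + \sum_(10 + k1 <= i < 10 + k1 + k2) xat x i)%N.

Definition H k (a : vec k) : nat := #|[set i | val (a i) != 0%N]|.

Definition zerovec k : vec k := [ffun _ => ord0].

(* omega = exp(-2 pi sqrt(-1) / 10): 5.-root (-1) is exp(i pi/5) (minimal
   nonnegative argument), and we take its complex conjugate. *)
Definition omega : algC := (5.-root (-1))^*.

Definition dot k (x a : vec k) : nat := (\sum_i val (x i) * val (a i))%N.

Definition chi k (a x : vec k) : algC := omega ^+ (dot x a).

(* Fourier coefficient: the unique hat Q_a with Q = sum_a hat Q_a chi_a *)
Definition fourier k (Q : vec k -> algC) (a : vec k) : algC :=
  (10 ^ k)%:R^-1 * \sum_(x : vec k) Q x * (chi a x)^*.

Definition Qfj k (f : vec k -> 'I_10) (j : 'I_10) : vec k -> algC :=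
  fun x => if f x == j then 1 else -1.

(* distributional complexity r(Q); convention: k+1 ("infinity") if Q has no
   nonzero Fourier coefficient at a nonzero frequency *)
Definition rQ k (Q : vec k -> algC) : nat :=
  \big[minn/k.+1]_(a : vec k | (a != zerovec k) && (fourier Q a != 0)) H a.

Definition r k (f : vec k -> 'I_10) : nat :=
  \big[minn/k.+1]_(j < 10) rQ (Qfj f j).

(* the restriction f_{|S,alpha} (alpha given on S; values off S ignored)
   is linear mod dh *)
Definition restr_linear k (f : vec k -> 'I_10) (S : {set 'I_k}) (alpha : vec k)
    (dh : nat) : Prop :=
  exists (a : 'I_k -> int) (b : int),
    forall x : vec k, (forall i, i \in S -> x i = alpha i) ->
      ((val (f x))%:Z = b + \sum_(i | i \notin S) a i * (val (x i))%:Z %[mod dh%:Z])%Z.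

Definition Pg k (f : vec k -> 'I_10) (l : nat) : Prop :=
  exists (S : {set 'I_k}) (alpha : vec k) (dh : nat),
    #|S| = l /\ (2 <= dh <= 10)%N /\ restr_linear f S alpha dh.

(* g(f): least l with Pg f l (l = k always works, so the default k is harmless) *)
Definition g k (f : vec k -> 'I_10) : nat :=
  \big[minn/k]_(l < k.+1 | asbool (Pg f l)) l.

Definition s k (f : vec k -> 'I_10) : rat :=
  Order.min ((r f)%:R / 2 : rat) ((g f).+1)%:R.

(* Main.v *)
Require Import Defs.
From HB Require Import structures.
From mathcomp Require Import all_boot all_order all_algebra all_field.
From mathcomp Require Import ring zify.
From Stdlib Require Import ClassicalEpsilon.
Import Order.TTheory GRing.Theory Num.Theory.
Set Implicit Arguments. Unset Strict Implicit. Unset Printing Implicit Defensive.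
Local Open Scope ring_scope.

Definition zeta : algC := 5.-root (-1).

Lemma zeta5 : zeta ^+ 5 = -1.
Proof. by rewrite /zeta rootCK. Qed.

Lemma zeta10 : zeta ^+ 10 = 1.
Proof. by rewrite (_ : 10%N = 5 * 2)%N // exprM zeta5 sqrrN expr1n. Qed.

Lemma good_root : exists y : algC, [/\ y ^+ 5 = -1, y != -1, `|y| = 1 & 0 <= 'Im y].
Proof.
have [z pz] := C_prim_root_exists (isT : (0 < 10)%N).
have z10 := prim_expr_order pz.
have z5 : z ^+ 5 = -1.
  have : (z ^+ 5) ^+ 2 == 1 by rewrite -exprM z10.
  rewrite sqrf_eq1 => /orP[|/eqP //].
  by rewrite -(prim_order_dvd pz).
have zn1 : z != -1.
  apply/eqP => zm; move: (prim_order_dvd pz 2); rewrite zm sqrrN expr1n eqxx.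
  by [].
have nz : `|z| = 1.
  apply/eqP; rewrite -(pexpr_eq1 (isT : (0 < 10)%N)) // -normrX z10 normr1 //.
have [Hi|Hi] := boolP (0 <= 'Im z).
  by exists z.
exists z^*; split.
- by rewrite -rmorphXn z5 rmorphN1.
- by apply: contra zn1 => /eqP h; rewrite -[z]conjCK h rmorphN1.
- by rewrite norm_conjC.
- rewrite Im_conj oppr_ge0.
  have : 'Im z \is Num.real by apply: Creal_Im.
  by move/real_leVge => /(_ 0 (rpred0 _)); rewrite (negbTE Hi) orbF.
Qed.

Lemma zeta_neq_m1 : zeta != -1.
Proof.
have [y [y5 yn1 ny Iy]] := good_root.
have Hle : 'Re y <= 'Re zeta := rootC_Re_max (isT : (0 < 5)%N) y5 Iy.
apply/eqP => ez; move: Hle; rewrite ez raddfN /= (Creal_ReP 1 (rpred1 _)).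
have key : `|1 + y| ^+ 2 = 2%:R + 2%:R * 'Re y.
  rewrite normCK rmorphD rmorph1 mulrDl !mulrDr mul1r mulr1.
  rewrite -normCK ny expr1n ReE.
  rewrite mulrCA divff ?mulr1 ?pnatr_eq0 //.
  by rewrite mul1r; ring.
have pos : 0 < `|1 + y| ^+ 2.
  by rewrite exprn_gt0 // normr_gt0 addrC addr_eq0.
move=> hre.
have : 2%:R + 2%:R * 'Re y <= 0.
  have -> : 2%:R + 2%:R * 'Re y = 2%:R * ('Re y + 1) :> algC by ring.
  by rewrite pmulr_rle0 ?ltr0n // -[0](addNr 1) lerD2r.
by rewrite -key => h; move: (lt_le_trans pos h); rewrite ltxx.
Qed.

Lemma m1_neq1 : (-1 : algC) != 1.
Proof. rewrite eq_sym -subr_eq0 opprK; have: (2%:R : algC) != 0 by rewrite pnatr_eq0.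
by []. Qed.

Lemma zeta_prim : 10.-primitive_root zeta.
Proof.
have [m pm md] := prim_order_exists (isT : (0 < 10)%N) zeta10.
have mle : (m <= 10)%N by apply: dvdn_leq.
have h5 : ~~ (m %| 5)%N.
  by rewrite (prim_order_dvd pm) zeta5 m1_neq1.
have h2 : ~~ (m %| 2)%N.
  rewrite (prim_order_dvd pm) sqrf_eq1 negb_or zeta_neq_m1 andbT.
  apply: contraNN h5 => /eqP z1; by rewrite (prim_order_dvd pm) z1 expr1n.
move: md mle h5 h2 pm.
by case: m => [|[|[|[|[|[|[|[|[|[|[|m]]]]]]]]]]].
Qed.

Lemma zeta_pow_neq1 c : (0 < c < 10)%N -> zeta ^+ c != 1.
Proof.
move=> /andP[c0 c10]; rewrite -(prim_order_dvd zeta_prim).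
by apply/negP => /(dvdn_leq c0); rewrite leqNgt c10.
Qed.

Lemma zeta_mod n : zeta ^+ n = zeta ^+ (n %% 10).
Proof. by rewrite {1}(divn_eq n 10) exprD mulnC exprM zeta10 expr1n mul1r. Qed.

Lemma sum_zeta : \sum_(v < 10) zeta ^+ v = 0.
Proof.
have h : (zeta - 1) * \sum_(v < 10) zeta ^+ v = 0.
  by rewrite -subrX1 zeta10 subrr.
move: h => /eqP; rewrite mulf_eq0 subr_eq0 => /orP[|/eqP //].
by move/eqP => z1; move: zeta5; rewrite z1 expr1n => /eqP; rewrite eq_sym (negbTE m1_neq1).
Qed.

Definition tau k (P : pred nat) (t : 'I_10) (x : vec k) : vec k :=
  [ffun i => if P (val i) then x i + t else x i].

Lemma tau_inj k P t : injective (@tau k P t).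
Proof.
move=> x y /ffunP h; apply/ffunP => i; move: (h i); rewrite !ffunE.
by case: (P _) => // /addIr.
Qed.

Lemma sum_tau k P t (F : vec k -> algC) : \sum_x F x = \sum_x F (tau P t x).
Proof. by rewrite (reindex_inj (@tau_inj k P t)). Qed.

Lemma avg k P (G : vec k -> algC) :
  10%:R * \sum_x G x = \sum_x \sum_(t < 10) G (tau P t x).
Proof.
rewrite exchange_big /= -(eq_bigr _ (fun t _ => sum_tau P t G)).
by rewrite sumr_const card_ord mulr_natl.
Qed.

Lemma xat_ord k (x : vec k) (i : 'I_k) : xat x i = val (x i).
Proof. by rewrite /xat valK. Qed.

Definition xz k (x : vec k) (i : nat) : 'I_10 := (xat x i)%:R.

Lemma xz_ord k (x : vec k) (i : 'I_k) : xz x i = x i.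
Proof. by rewrite /xz xat_ord natr_Zp. Qed.

Lemma xz_tau k P t (x : vec k) i : (i < k)%N ->
  xz (tau P t x) i = xz x i + (if P i then t else 0).
Proof.
move=> ik; rewrite -[i]/(val (Ordinal ik)) !xz_ord ffunE /=.
by case: (P i); rewrite ?addr0.
Qed.

Lemma modZ10E n : modZ10 n = n%:R.
Proof. by apply: val_inj; rewrite /= (val_Zp_nat (p:=10)). Qed.

Lemma val_natZ n : val (n%:R : 'I_10) = (n %% 10)%N.
Proof. by rewrite -modZ10E. Qed.

Lemma val_addZ (u v : 'I_10) : val (u + v) = ((val u + val v) %% 10)%N.
Proof. by []. Qed.

Lemma sum_xz_tau k P t (x : vec k) m n : (n <= k)%N ->
  \sum_(m <= i < n) xz (tau P t x) i =
  \sum_(m <= i < n) xz x i + \sum_(m <= i < n | P i) t.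
Proof.
move=> nk; rewrite [X in _ = _ + X]big_mkcond /= -big_split /=.
rewrite big_nat_cond [RHS]big_nat_cond; apply: eq_bigr => i /andP[/andP[_ hi] _].
by rewrite xz_tau // (leq_trans hi nk).
Qed.

Definition Jsel k1 k2 (x : vec (10 + k1 + k2)) : nat :=
  val (\sum_(10 <= i < 10 + k1) xz x i).

Lemma fkE k1 k2 (x : vec (10 + k1 + k2)) :
  fk x = xz x (Jsel x) + \sum_(10 + k1 <= i < 10 + k1 + k2) xz x i.
Proof.
rewrite /fk /Jsel modZ10E natrD natr_sum /xz; congr (_ + _).
by congr ((xat x _)%:R); rewrite -natr_sum -modZ10E.
Qed.

Lemma Jsel_lt k1 k2 (x : vec (10 + k1 + k2)) : (Jsel x < 10)%N.
Proof. exact: ltn_ord. Qed.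

Lemma fk_tau k1 k2 P t (x : vec (10 + k1 + k2))
  (hP : forall i, (10 <= i < 10 + k1)%N -> ~~ P i) :
  Jsel (tau P t x) = Jsel x /\
  fk (tau P t x) = fk x + (if P (Jsel x) then t else 0)
                   + \sum_(10 + k1 <= i < 10 + k1 + k2 | P i) t.
Proof.
have hJ : Jsel (tau P t x) = Jsel x.
  rewrite /Jsel sum_xz_tau ?leq_addr //.
  suff -> : \sum_(10 <= i < 10 + k1 | P i) t = 0 :> 'I_10 by rewrite addr0.
  rewrite big_nat_cond big1 //.
  by move=> i /andP[hi Pi]; rewrite (negbTE (hP i hi)) in Pi.
split => //.
rewrite !fkE hJ sum_xz_tau // xz_tau; last first.
  by apply: (leq_trans (Jsel_lt x)); rewrite -addnA leq_addr.
by rewrite -!addrA; congr (_ + _); rewrite addrCA.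
Qed.

Definition dz k (x a : vec k) : 'I_10 := \sum_i x i * a i.
Definition E (z : 'I_10) : algC := zeta ^+ val z.

Lemma E_add u v : E (u + v) = E u * E v.
Proof. by rewrite /E val_addZ -zeta_mod exprD. Qed.

Lemma E0 : E 0 = 1.
Proof. by rewrite /E expr0. Qed.

Lemma conjchiE k (a x : vec k) : (chi a x)^* = E (dz x a).
Proof.
rewrite /chi /omega rmorphXn.
rewrite (_ : _ ^+ _ = zeta ^+ dot x a); last by congr (_ ^+ _); exact: conjCK.
rewrite /E zeta_mod; congr (zeta ^+ _).
rewrite -val_natZ /dot natr_sum; congr val; apply: eq_bigr => i _.
by rewrite natrM !natr_Zp.
Qed.

Lemma dz_tau k P t (x a : vec k) :
  dz (tau P t x) a = dz x a + t * \sum_(i | P (val i)) a i.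
Proof.
rewrite /dz mulr_sumr [X in _ = _ + X]big_mkcond /= -big_split /=; apply: eq_bigr => i _.
by rewrite ffunE; case: (P _); rewrite ?mulrDl ?mulr0 ?addr0.
Qed.

Lemma sumE0 k (a : vec k) : a != zerovec k -> \sum_x E (dz x a) = 0.
Proof.
move=> ha.
have : [exists i, a i != 0].
  apply: contraR ha => /existsPn h; apply/eqP/ffunP => i; rewrite ffunE.
  by apply/eqP; move: (h i); rewrite negbK.
case/existsP=> i0 hi0.
set S := \sum_x _.
have hS : S = S * E (a i0).
  rewrite {1}/S (sum_tau (fun n => n == val i0) 1) mulr_suml; apply: eq_bigr => x _.
  by rewrite dz_tau mul1r (big_pred1 i0) ?E_add.
have hE : E (a i0) != 1.
  apply: zeta_pow_neq1; rewrite ltn_ord andbT lt0n.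
  by apply: contra hi0 => /eqP h; apply/eqP/val_inj.
apply/eqP; move: hS => /eqP; rewrite -subr_eq0 -{1}(mulr1 S) -mulrBr mulf_eq0.
by rewrite subr_eq0 => /orP[//|/eqP h]; rewrite -h eqxx in hE.
Qed.

Lemma sum_shift (F : 'I_10 -> algC) (u : 'I_10) :
  \sum_(t < 10) F (u + t) = \sum_(t < 10) F t.
Proof. by rewrite [RHS](reindex_inj (addrI u)). Qed.

Lemma fourier_vanish k (f : vec k -> 'I_10) (a : vec k) j0 (P : pred nat)
  (hf : forall x t, f (tau P t x) = f x + t)
  (ha : forall i : 'I_k, P (val i) -> a i = 0)
  (hsum : \sum_x E (dz x a) = 0) : fourier (Qfj f j0) a = 0.
Proof.
rewrite /fourier; apply/eqP; rewrite mulf_eq0; apply/orP; right.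
under eq_bigr do rewrite conjchiE.
set G := fun x => Qfj f j0 x * E (dz x a).
rewrite -/(\sum_x G x).
have h10 : (10%:R : algC) != 0 by rewrite pnatr_eq0.
rewrite -(mulrI_eq0 _ (mulfI h10)) (avg P).
have hz : \sum_(i | P (val i)) a i = 0.
  by rewrite big1 // => i /ha.
under eq_bigr => x _.
  under eq_bigr => t _ do rewrite /G /Qfj hf dz_tau hz mulr0 addr0.
  rewrite -mulr_suml (sum_shift (fun v => if v == j0 then 1 else -1)).
  over.
by rewrite -mulr_sumr hsum mulr0.
Qed.

Lemma sum_nat_pred1 (m n i0 : nat) (t : 'I_10) : (m <= i0 < n)%N ->
  \sum_(m <= i < n | i == i0) t = t.
Proof.
by move=> h; rewrite big_nat1_eq h.
Qed.

Lemma lin_contra (d : nat) (b ap am u0 u1 v0 v1 c : int) : (2 <= d)%N ->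
  (0 = b + (ap * u0 + am * v0) %[mod d%:Z])%Z ->
  (1 = b + (ap * u0 + am * v1) %[mod d%:Z])%Z ->
  (c = b + (ap * u1 + am * v0) %[mod d%:Z])%Z ->
  (c = b + (ap * u1 + am * v1) %[mod d%:Z])%Z -> False.
Proof.
move=> hd /eqP h1 /eqP h2 /eqP h3 /eqP h4.
rewrite eqz_mod_dvd in h1; rewrite eqz_mod_dvd in h2.
rewrite eqz_mod_dvd in h3; rewrite eqz_mod_dvd in h4.
have : (d%:Z %| (1 - (b + (ap * u0 + am * v1))) - (0 - (b + (ap * u0 + am * v0)))
          - (c - (b + (ap * u1 + am * v1))) + (c - (b + (ap * u1 + am * v0))))%Z.
  by apply: rpredD => //; apply: rpredB => //; apply: rpredB.
have -> : (1 - (b + (ap * u0 + am * v1))) - (0 - (b + (ap * u0 + am * v0)))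
          - (c - (b + (ap * u1 + am * v1))) + (c - (b + (ap * u1 + am * v0))) = 1 by ring.
rewrite dvdz1 /=; lia.
Qed.

Section Fk.
Variables k1 k2 : nat.
Local Notation K := (10 + k1 + k2)%N.

Lemma fk_low (j0 : 'I_10) (a : vec K) :
  a != zerovec K -> (H a <= k2)%N -> fourier (Qfj (@fk k1 k2) j0) a = 0.
Proof.
move=> ha hH.
have hsum := sumE0 ha.
case: (boolP [exists i : 'I_k2, a (rshift (10 + k1) i) == 0]).
  case/existsP => i /eqP ai.
  set i0 := rshift (10 + k1) i.
  have hi0 : (10 + k1 <= val i0 < K)%N by rewrite /= leq_addr /= ltn_add2l ltn_ord.
  apply: (@fourier_vanish _ _ _ j0 (fun n => n == val i0)) => //.
  - move=> x t.
    have hP : forall j, (10 <= j < 10 + k1)%N -> ~~ (j == val i0).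
      move=> j /andP[_ hj]; rewrite neq_ltn (leq_trans hj) //.
      by case/andP: hi0.
    have [_ ->] := @fk_tau k1 k2 (fun n => n == val i0) t x hP.
    rewrite sum_nat_pred1 //.
    have -> : (Jsel x == val i0) = false.
      apply/negbTE; rewrite neq_ltn; apply/orP; left.
      case/andP: hi0 => h _; apply: leq_trans h.
      exact: leq_trans (Jsel_lt x) (leq_addr _ _).
    by rewrite addr0.
  - by move=> j /eqP /val_inj ->.
move/existsPn => hL.
have hD : forall j : 'I_K, (val j < 10)%N -> a j = 0.
  move=> d hd; apply/eqP; apply: contraLR hH => had; rewrite -ltnNge.
  set L := [set rshift (10 + k1) i | i : 'I_k2].
  have cL : #|L| = k2 by rewrite card_imset ?card_ord //; apply: rshift_inj.
  have dL : d \notin L.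
    apply/imsetP => [[i _ hdi]]; move: hd; rewrite hdi /=.
    by rewrite ltnNge -addnA leq_addr.
  have sub : d |: L \subset [set i | val (a i) != 0%N].
    apply/subsetP => j; rewrite !inE => /orP[/eqP -> | /imsetP[i _ ->]].
      by apply: contra had => /eqP h; apply/eqP/val_inj.
    by move: (hL i); apply: contra => /eqP h; apply/eqP/val_inj.
  by move: (subset_leq_card sub); rewrite cardsU1 dL cL.
apply: (@fourier_vanish _ _ _ j0 (fun n => (n < 10)%N)) => //.
move=> x t.
have hP : forall j, (10 <= j < 10 + k1)%N -> ~~ (j < 10)%N.
  by move=> i /andP[hi _]; rewrite -leqNgt.
have [_ ->] := @fk_tau k1 k2 (fun n => (n < 10)%N) t x hP.
rewrite Jsel_lt big_nat_cond big1 ?addr0 //.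
move=> i /andP[/andP[hi _] hi10].
by move: (leq_trans hi10 (leq_trans (leq_addr k1 10) hi)); rewrite ltnn.
Qed.

Definition aw : vec K :=
  [ffun i : 'I_K => if (val i == 0%N) || (10 + k1 <= val i)%N then 1 else 0].

Lemma dz_aw (x : vec K) : Jsel x = 0%N -> dz x aw = fk x.
Proof.
move=> hJ; rewrite fkE hJ /dz.
rewrite (eq_bigr (fun i : 'I_K => if (val i == 0%N) || (10 + k1 <= val i)%N
                    then xz x (val i) else 0)); last first.
  by move=> i _; rewrite ffunE xz_ord; case: ifP; rewrite ?mulr1 ?mulr0.
rewrite -(big_mkord xpredT (fun i => if (i == 0%N) || (10 + k1 <= i)%N
                    then xz x i else 0)).
rewrite (big_cat_nat _ (n := 1)) //=.
rewrite big_nat1 /=.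
rewrite (big_cat_nat _ (n := 10 + k1)) //=; last by rewrite leq_addr.
rewrite [X in _ + (X + _)]big_nat_cond big1 ?add0r; last first.
  by move=> i /andP[/andP[h1 h2] _]; rewrite leqNgt h2 (gtn_eqF h1).
congr (_ + _); rewrite big_nat_cond [RHS]big_nat_cond.
by apply: eq_bigr => i /andP[/andP[-> _] _]; rewrite orbT.
Qed.

Lemma K_gt0 : (0 < K)%N.
Proof. by rewrite !addn_gt0. Qed.

Definition o0 : 'I_K := Ordinal K_gt0.

Lemma aw_o0 : aw o0 = 1.
Proof. by rewrite ffunE. Qed.

Lemma aw_nz : aw != zerovec K.
Proof.
apply/eqP => /ffunP /(_ o0); rewrite aw_o0 ffunE => h.
by move: (congr1 val h).
Qed.

Lemma Jsel0 : Jsel (zerovec K) = 0%N.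
Proof.
rewrite /Jsel big1 // => i _.
rewrite /xz /xat; case: insub => [o|] //=; by rewrite ffunE.
Qed.

Lemma C2E : \sum_(v < 10) (if v == 0 then 1 else -1) * E v = 2%:R.
Proof.
have hs : \sum_(v < 10) E v = 0 by exact: sum_zeta.
rewrite (bigD1 0) //= in hs; rewrite (bigD1 0) //= mul1r E0.
rewrite (eq_bigr (fun v => - E v)); last first.
  by move=> v /negbTE ->; rewrite mulN1r.
rewrite sumrN E0 in hs *.
have -> : \sum_(i < 10 | i != 0) E i = -1.
  by apply/eqP; rewrite -addr_eq0 addrC hs.
by rewrite opprK.
Qed.

Lemma H_aw : (H aw <= k2.+1)%N.
Proof.
set L := [set rshift (10 + k1) i | i : 'I_k2].
have sub : [set i | val (aw i) != 0%N] \subset o0 |: L.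
  apply/subsetP => j; rewrite !inE ffunE.
  case: ifP => // /orP[/eqP h0 _| h _].
    by apply/orP; left; apply/eqP/val_inj.
  apply/orP; right; apply/imsetP.
  have hj : (j - (10 + k1) < k2)%N.
    by rewrite ltn_subLR // (ltn_ord j).
  exists (Ordinal hj) => //; apply: val_inj => /=; by rewrite subnKC.
apply: leq_trans (subset_leq_card sub) _.
rewrite cardsU1 -[k2.+1]add1n; apply: leq_add; first by case: (_ \notin _).
by apply: leq_trans (leq_imset_card _ _) _; rewrite card_ord.
Qed.

Lemma fourier_aw : fourier (Qfj (@fk k1 k2) 0) aw != 0.
Proof.
rewrite /fourier mulf_eq0 negb_or; apply/andP; split.
  by rewrite invr_eq0 pnatr_eq0 expn_eq0.
under eq_bigr do rewrite conjchiE.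
set P := fun n : nat => n == 0%N.
have hP : forall j, (10 <= j < 10 + k1)%N -> ~~ P j.
  by move=> j /andP[hj _]; rewrite /P; case: j hj.
have hz : \sum_(i | P (val i)) aw i = 1.
  by rewrite (big_pred1 o0) ?aw_o0.
have hl : forall t : 'I_10, \sum_(10 + k1 <= i < K | P i) t = 0.
  move=> t; rewrite big_nat_cond big1 // => i /andP[/andP[hi _] Pi].
  by move: Pi hi; rewrite /P => /eqP ->.
set G := fun x => Qfj (@fk k1 k2) 0 x * E (dz x aw).
rewrite -/(\sum_x G x).
have h10 : (10%:R : algC) != 0 by rewrite pnatr_eq0.
rewrite -(mulrI_eq0 _ (mulfI h10)) (avg P).
have step : forall x, \sum_(t < 10) G (tau P t x) =
   (if Jsel x == 0%N then 2%:R else 0).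
  move=> x.
  have e : forall t, G (tau P t x) =
     Qfj (@fk k1 k2) 0 (tau P t x) * (E (dz x aw) * E t).
    by move=> t; rewrite /G dz_tau hz mulr1 E_add.
  under eq_bigr do rewrite e.
  case: ifP => hJ.
    under eq_bigr => t _.
      rewrite /Qfj; have [_ ->] := @fk_tau k1 k2 P t x hP.
      rewrite hl addr0 /P hJ -E_add dz_aw ?(eqP hJ) //.
      over.
    rewrite /Qfj (sum_shift (fun v => (if v == 0 then 1 else -1) * E v)).
    exact: C2E.
  under eq_bigr => t _.
    rewrite /Qfj; have [_ ->] := @fk_tau k1 k2 P t x hP.
    rewrite hl addr0 /P hJ addr0 mulrA.
    over.
  by rewrite -mulr_sumr sum_zeta mulr0.
under eq_bigr do rewrite step.
rewrite (bigD1 (zerovec K)) //= Jsel0 eqxx.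
apply: lt0r_neq0; apply: ltr_pwDl; first by rewrite ltr0n.
by apply: sumr_ge0 => x _; case: ifP; rewrite ?ler0n.
Qed.

Lemma free_idx n (h : 'I_n -> 'I_K) (S : {set 'I_K}) :
  injective h -> (#|S| < n)%N -> exists i, h i \notin S.
Proof.
move=> hi hS; apply/existsP; apply: contraLR hS => /existsPn hn.
rewrite -leqNgt -{1}(card_ord n) -(card_imset _ hi).
apply: subset_leq_card; apply/subsetP => j /imsetP[i _ ->].
by move: (hn i); rewrite negbK.
Qed.

Definition tau2 (p m : 'I_K) (u v : 'I_10) (z : vec K) :=
  tau (fun n => n == val p) u (tau (fun n => n == val m) v z).

Lemma sum_nat_pred1_out (m0 n i0 : nat) (t : 'I_10) : ~~ (m0 <= i0 < n)%N ->
  \sum_(m0 <= i < n | i == i0) t = 0.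
Proof. by move=> h; rewrite big_nat1_eq (negbTE h). Qed.

Lemma not_Pg l : (k1 <= 10)%N -> (l < k1)%N -> ~ Pg (@fk k1 k2) l.
Proof.
move=> hk1 hl [S [alpha [dh [hS [hdh [a [b hlin]]]]]]].
have hSk : (#|S| < k1)%N by rewrite hS.
have injp : injective (fun i : 'I_k1 => lshift k2 (rshift 10 i) : 'I_K).
  by move=> i j /lshift_inj /rshift_inj.
have injm : injective (fun i : 'I_10 => lshift k2 (lshift k1 i) : 'I_K).
  by move=> i j /lshift_inj /lshift_inj.
have [ip hp] := free_idx injp hSk.
have [im hm] := free_idx injm (leq_trans hSk hk1).
set p : 'I_K := lshift k2 (rshift 10 ip) in hp.
set m : 'I_K := lshift k2 (lshift k1 im) in hm.
have vp : val p = (10 + ip)%N by [].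
have vm : val m = im by [].
have eo : forall i j : 'I_K, (val i == val j) = (i == j) by [].
have pm : (p == m) = false.
  by apply/negbTE; rewrite -eo vp vm neq_ltn; apply/orP; right; rewrite ltn_addr.
set z : vec K := [ffun i => if i \in S then alpha i else 0].
have zp : z p = 0 by rewrite ffunE (negbTE hp).
have zm : z m = 0 by rewrite ffunE (negbTE hm).
set X := fun u v => tau2 p m u v z.
have XS : forall u v i, i \in S -> X u v i = alpha i.
  move=> u v i iS; rewrite /X /tau2 !ffunE iS !eo.
  have -> : (i == p) = false by apply/negbTE; apply: contraNneq hp => <-.
  have -> : (i == m) = false by apply/negbTE; apply: contraNneq hm => <-.
  by [].
have Xn : forall u v i, i \notin S ->
    val (X u v i) = if i == p then val u else if i == m then val v else 0%N.
  move=> u v i iS; rewrite /X /tau2 !ffunE (negbTE iS) !eo.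
  case: ifP => hip.
    have -> : (i == m) = false by rewrite (eqP hip) pm.
    by rewrite add0r.
  by case: ifP => // _; rewrite add0r.
have lin : forall u v, \sum_(i | i \notin S) a i * (val (X u v i))%:Z =
    a p * (val u)%:Z + a m * (val v)%:Z.
  move=> u v; rewrite (bigD1 p) //= (bigD1 m) /=; last by rewrite hm eq_sym pm.
  rewrite big1 ?addr0; last first.
    move=> i /andP[/andP[iS ip'] im']; rewrite Xn // (negbTE ip') (negbTE im').
    by rewrite mulr0.
  by rewrite !Xn // eqxx (eq_sym m p) pm eqxx.
set sg := \sum_(10 <= i < 10 + k1) xz z i.
set T := \sum_(10 + k1 <= i < K) xz z i.
have pin : (10 <= val p < 10 + k1)%N by rewrite vp leq_addr ltn_add2l ltn_ord.
have mout : ~~ (10 <= val m < 10 + k1)%N by rewrite vm leqNgt ltn_ord.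
have pout2 : ~~ (10 + k1 <= val p < K)%N by rewrite vp leqNgt ltn_add2l ltn_ord.
have mout2 : ~~ (10 + k1 <= val m < K)%N.
  by rewrite vm leqNgt (ltn_addr _ (ltn_ord im)).
have hsel : forall u v, \sum_(10 <= i < 10 + k1) xz (X u v) i = sg + u.
  move=> u v; rewrite /X /tau2 sum_xz_tau ?leq_addr // sum_xz_tau ?leq_addr //.
  by rewrite sum_nat_pred1_out // sum_nat_pred1 // addr0.
have hlast : forall u v, \sum_(10 + k1 <= i < K) xz (X u v) i = T.
  move=> u v; rewrite /X /tau2 sum_xz_tau // sum_xz_tau //.
  by rewrite !sum_nat_pred1_out // !addr0.
have hxz : forall u v (j : nat), (j < 10)%N ->
    xz (X u v) j = xz z j + (if j == val m then v else 0).
  move=> u v j hj.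
  have jK : (j < K)%N by apply: leq_trans hj _; rewrite -addnA leq_addr.
  rewrite /X /tau2 xz_tau // xz_tau //.
  have -> : (j == val p) = false.
    by apply/negbTE; rewrite neq_ltn vp; apply/orP; left; apply: leq_trans hj (leq_addr _ _).
  by rewrite addr0.
have hf : forall u v, fk (X u v) =
    xz z (val (sg + u)) + (if val (sg + u) == val m then v else 0) + T.
  by move=> u v; rewrite fkE /Jsel hsel hxz ?ltn_ord // hlast.
set u0 := (val m)%:R - sg.
set u1 := u0 + 1.
have su0 : val (sg + u0) = val m.
  by rewrite /u0 addrC subrK val_natZ vm modn_small ?ltn_ord.
have su1 : (val (sg + u1) == val m) = false.
  rewrite /u1 addrA val_addZ su0 vm.
  move: (ltn_ord im); move: (nat_of_ord im) => w.
  by case: w => [|[|[|[|[|[|[|[|[|[|w]]]]]]]]]].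
have xzm : xz z (val m) = 0 by rewrite xz_ord zm.
have f00 : val (fk (X u0 (- T))) = 0%N by rewrite hf su0 eqxx xzm add0r addNr.
have f01 : val (fk (X u0 (1 - T))) = 1%N by rewrite hf su0 eqxx xzm add0r subrK.
have f1 : forall v, fk (X u1 v) = xz z (val (sg + u1)) + T.
  by move=> v; rewrite hf su1 addr0.
have hd2 : (2 <= dh)%N by case/andP: hdh.
have H0 := hlin _ (XS u0 (- T)); rewrite lin f00 in H0.
have H1 := hlin _ (XS u0 (1 - T)); rewrite lin f01 in H1.
have H2 := hlin _ (XS u1 (- T)); rewrite lin f1 in H2.
have H3 := hlin _ (XS u1 (1 - T)); rewrite lin f1 in H3.
exact: (lin_contra hd2 H0 H1 H2 H3).
Qed.

Lemma val_dz (x a : vec K) : val (dz x a) = (dot x a %% 10)%N.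
Proof.
rewrite -val_natZ /dot natr_sum; congr val; apply: eq_bigr => i _.
by rewrite natrM !natr_Zp.
Qed.

Lemma Pg_k1 : Pg (@fk k1 k2) k1.
Proof.
have injp : injective (fun i : 'I_k1 => lshift k2 (rshift 10 i) : 'I_K).
  by move=> i j /lshift_inj /rshift_inj.
set S := [set lshift k2 (rshift 10 i) | i : 'I_k1].
exists S, (zerovec K), 10%N; split; first by rewrite card_imset // card_ord.
split => //.
exists (fun i => (val (aw i))%:Z), 0 => x hx.
have hJ : Jsel x = 0%N.
  rewrite /Jsel big_nat_cond big1 // => i /andP[/andP[h1 h2] _].
  have iK : (i < K)%N by apply: leq_trans h2 (leq_addr _ _).
  rewrite -[i]/(val (Ordinal iK)) xz_ord hx ?ffunE //.
  apply/imsetP; have hi : (i - 10 < k1)%N by rewrite ltn_subLR.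
  by exists (Ordinal hi) => //; apply: val_inj => /=; rewrite subnKC.
rewrite -dz_aw // val_dz add0r.
have -> : \sum_(i | i \notin S) (val (aw i))%:Z * (val (x i))%:Z
          = \sum_i (val (aw i))%:Z * (val (x i))%:Z.
  rewrite [RHS](bigID (mem S)) /= [X in _ = X + _]big1 ?add0r // => i iS.
  rewrite ffunE.
  case/imsetP: iS => j _ -> /=.
  by rewrite leq_add2l leqNgt ltn_ord mul0r.
rewrite -(modz_nat (dot x aw) 10) modz_mod /dot.
rewrite (big_morph Posz PoszD (erefl (Posz 0))).
by congr (_ %% _)%Z; apply: eq_bigr => i _; rewrite PoszM mulrC.
Qed.

End Fk.

Lemma bigmin_le (I : finType) (P : pred I) (F : I -> nat) d i0 :
  P i0 -> (\big[minn/d]_(i | P i) F i <= F i0)%N.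
Proof.
move=> Pi0; have : i0 \in index_enum I by rewrite mem_index_enum.
elim: (index_enum I) => //= j r IH; rewrite inE big_cons.
case/orP => [/eqP <-|h]; first by rewrite Pi0 geq_minl.
by case: (P j); [rewrite geq_min IH ?orbT | exact: IH].
Qed.

Lemma asboolT (P : Prop) : P -> asbool P = true.
Proof. by rewrite /asbool; case: excluded_middle_informative. Qed.

Lemma asboolP (P : Prop) : asbool P -> P.
Proof. by rewrite /asbool; case: excluded_middle_informative. Qed.

Unset Implicit Arguments.
Local Close Scope ring_scope.

Theorem claim1 (k1 k2 : nat) (hk1 : (0 < k1 <= 10)%N) (hk2 : (0 < k2)%N) :
  g (@fk k1 k2) = k1 /\ r (@fk k1 k2) = k2.+1 /\
  s (@fk k1 k2) = Order.min ((k2.+1)%:R / 2 : rat) ((k1.+1)%:R : rat).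
Proof.
case/andP: hk1 => hk1a hk1b.
have hg : g (@fk k1 k2) = k1.
  apply/eqP; rewrite eqn_leq; apply/andP; split.
    have hk : (k1 < (10 + k1 + k2).+1)%N by rewrite ltnS -addnA addnCA leq_addr.
    rewrite /g; apply: leq_trans (@bigmin_le _ _ (fun l : 'I_(10 + k1 + k2).+1 => val l) _ (Ordinal hk) _) _ => //=.
    by rewrite asboolT //; exact: (@Pg_k1 k1 k2).
  rewrite /g; apply: (big_ind (fun n => k1 <= n)%N) => //.
  - by rewrite -addnA addnCA leq_addr.
  - by move=> x y hx hy; rewrite leq_min hx hy.
  - move=> l /asboolP hP; rewrite leqNgt; apply/negP => hl.
    exact: (not_Pg hk1b hl hP).
have hr : r (@fk k1 k2) = k2.+1.
  apply/eqP; rewrite eqn_leq; apply/andP; split.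
    rewrite /r; apply: leq_trans (@bigmin_le _ _ _ _ (0 : 'I_10)%R _) _ => //.
    rewrite /rQ; apply: leq_trans (@bigmin_le _ _ _ _ (@aw k1 k2) _) _.
      by rewrite aw_nz fourier_aw.
    exact: H_aw.
  rewrite /r; apply: (big_ind (fun n => k2 < n)%N) => //.
  - by rewrite ltnS leq_addl.
  - by move=> x y hx hy; rewrite leq_min hx hy.
  - move=> j _; rewrite /rQ; apply: (big_ind (fun n => k2 < n)%N) => //.
    + by rewrite ltnS leq_addl.
    + by move=> x y hx hy; rewrite leq_min hx hy.
    + move=> a /andP[ha hf]; rewrite ltnNge; apply/negP => hH.
      by move: hf; rewrite (fk_low j ha hH) eqxx.
split; first exact: hg.
split; first exact: hr.
by rewrite /s hr hg.
Qed.
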